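(* Let $V$ be a vector space over a field $\mathbb K$ and $Mag(V)$ the free unital magmatic algebra on $V$. There is a unique linear map $\Delta:Mag(V)\to Mag(V)\otimes Mag(V)$ such that $\Delta(1)=1\otimes1$, $\Delta(v)=v\otimes1+1\otimes v$ for all $v\in V$, and $\Delta(x\cdot y)=\Delta(x)\cdot(1\otimes y)+(x\otimes1)\cdot\Delta(y)-x\otimes y$ for all $x,y\in Mag(V)$; this $\Delta$ is coassociative, and with it (and the counit given by projection onto $\mathbb K1$) $Mag(V)$ is an $As^c$-$Mag$-bialgebra.
   Context: $Mag(V)=\bigoplus_{n\ge0}\mathbb K[Y_{n-1}]\otimes V^{\otimes n}$, where $Y_{n-1}$ is the set of planar binary rooted trees with $n$ leaves and the $n=0$ summand is $\mathbb K1$; the product is $(t;v_1\dots v_p)\cdot(s;v_{p+1}\dots v_{p+q})=(t\vee s;v_1\dots v_{p+q})$, $t\vee s$ being the grafting of $t$ and $s$ on a new root, with unit $1$; $V$ is identified with the summand for the one-leaf tree. The product on $Mag(V)\otimes Mag(V)$ is $(x\otimes y)\cdot(x'\otimes y')=(x\cdot x')\otimes(y\cdot y')$. An $As^c$-$Mag$-bialgebra is a vector space with a unital (not necessarily associative) product $\cdot$ and a coassociative counital coproduct $\Delta$ with $\Delta(1)=1\otimes1$ satisfying the displayed compatibility relation. *)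

(* Defs.v *)
From HB Require Import structures.
From mathcomp Require Import all_boot all_order all_algebra.
From mathcomp Require Import finmap.
From mathcomp.multinomials Require Import monalg.

Set Implicit Arguments.
Unset Strict Implicit.
Unset Printing Implicit Defensive.

Import GRing.Theory.
Local Open Scope ring_scope.

(* Planar binary rooted trees with n >= 1 leaves, leaves decorated by  *)
(* basis vectors of V (a tree in Y_{n-1} together with x_1 ... x_n).   *)
Inductive btree (X : Type) : Type :=
| BLeaf of X
| BNode of btree X & btree X.

Fixpoint btree_enc (X : Type) (t : btree X) : GenTree.tree X :=
  match t with
  | BLeaf x => GenTree.Leaf x
  | BNode a b => GenTree.Node 0 [:: btree_enc a; btree_enc b]
  end.

Fixpoint btree_dec (X : Type) (t : GenTree.tree X) : option (btree X) :=
  match t with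
  | GenTree.Leaf x => Some (BLeaf x)
  | GenTree.Node 0 [:: a; b] =>
      match btree_dec a, btree_dec b with
      | Some a', Some b' => Some (BNode a' b')
      | _, _ => None
      end
  | _ => None
  end.

Lemma btree_encK (X : Type) : pcancel (@btree_enc X) (@btree_dec X).
Proof. by elim=> [x|a IHa b IHb] //=; rewrite IHa IHb. Qed.

HB.instance Definition _ (X : choiceType) :=
  Choice.copy (btree X) (pcan_type (@btree_encK X)).

(* Basis of Mag(V): None is the unit 1 (the n = 0 summand K1),
   Some t is the decorated tree t. *)
Definition magb (X : choiceType) := option (btree X).

Section Mag.
Variables (K : fieldType) (X : choiceType).

Definition Vsp := {malg K[X]}.
(* Mag(V), Mag(V) (x) Mag(V), Mag(V)^{(x)3}, as free modules on the
   corresponding tensor bases. *)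
Definition Mag := {malg K[(magb X)]}.
Definition Mag2 := {malg K[(magb X * magb X)%type]}.
Definition Mag3 := {malg K[(magb X * magb X * magb X)%type]}.

Definition lext (T : choiceType) (M : lmodType K) (f : T -> M)
  (g : {malg K[T]}) : M :=
  \sum_(k <- msupp g) g@_k *: f k.

Definition bext (T U : choiceType) (M : lmodType K) (f : T -> U -> M)
  (g : {malg K[T]}) (h : {malg K[U]}) : M :=
  \sum_(k <- msupp g) \sum_(l <- msupp h) (g@_k * h@_l) *: f k l.

Definition graft (t s : magb X) : magb X :=
  match t, s with
  | None, _ => s
  | _, None => t
  | Some a, Some b => Some (BNode a b)
  end.

Definition mag_one : Mag := << None >>.
Definition mag_mul (x y : Mag) : Mag :=
  bext (fun t s => << graft t s >> : Mag) x y.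

Definition mag_incl (v : Vsp) : Mag :=
  lext (fun x => << Some (BLeaf x) >> : Mag) v.

Definition tens (x y : Mag) : Mag2 :=
  bext (fun t s => << (t, s) >> : Mag2) x y.

Definition mag2_mul (u w : Mag2) : Mag2 :=
  bext (fun p q => << (graft p.1 q.1, graft p.2 q.2) >> : Mag2) u w.

Definition tens3L (u : Mag2) (z : Mag) : Mag3 :=
  bext (fun p s => << (p.1, p.2, s) >> : Mag3) u z.
Definition tens3R (z : Mag) (u : Mag2) : Mag3 :=
  bext (fun t p => << (t, p.1, p.2) >> : Mag3) z u.
Definition DeltaId (D : Mag -> Mag2) (u : Mag2) : Mag3 :=
  lext (fun p => tens3L (D << p.1 >>) << p.2 >>) u.
Definition IdDelta (D : Mag -> Mag2) (u : Mag2) : Mag3 :=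
  lext (fun p => tens3R << p.1 >> (D << p.2 >>)) u.

(* eps (x) id and id (x) eps : Mag2 -> Mag  (K (x) Mag = Mag = Mag (x) K) *)
Definition epsId (e : Mag -> K) (u : Mag2) : Mag :=
  lext (fun p => e << p.1 >> *: (<< p.2 >> : Mag)) u.
Definition Ideps (e : Mag -> K) (u : Mag2) : Mag :=
  lext (fun p => e << p.2 >> *: (<< p.1 >> : Mag)) u.

Definition mag_counit (x : Mag) : K := x@_None.

Definition is_mag_coproduct (D : Mag -> Mag2) : Prop :=
  [/\ linear D,
      D mag_one = tens mag_one mag_one,
      (forall v : Vsp, D (mag_incl v) =
          tens (mag_incl v) mag_one + tens mag_one (mag_incl v)) &
      (forall x y : Mag, D (mag_mul x y) =
          mag2_mul (D x) (tens mag_one y) + mag2_mul (tens x mag_one) (D y)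
          - tens x y)].

Definition coassociative (D : Mag -> Mag2) : Prop :=
  forall x : Mag, DeltaId D (D x) = IdDelta D (D x).

Definition counital (D : Mag -> Mag2) (e : Mag -> K) : Prop :=
  forall x : Mag, epsId e (D x) = x /\ Ideps e (D x) = x.

Definition AscMag_bialgebra (D : Mag -> Mag2) (e : Mag -> K) : Prop :=
  [/\ forall x : Mag, mag_mul mag_one x = x /\ mag_mul x mag_one = x,
      linear D /\ linear_for *%R e,
      coassociative D /\ counital D e,
      D mag_one = tens mag_one mag_one &
      forall x y : Mag, D (mag_mul x y) =
          mag2_mul (D x) (tens mag_one y) + mag2_mul (tens x mag_one) (D y)
          - tens x y].

End Mag.

(* Main.v *)
Require Import Defs.
From HB Require Import structures.
From mathcomp Require Import all_boot all_order all_algebra.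
From mathcomp Require Import finmap.
From mathcomp.multinomials Require Import monalg.
From mathcomp Require Import zify.
From Stdlib Require Import FunctionalExtensionality.

Set Implicit Arguments.
Unset Strict Implicit.
Unset Printing Implicit Defensive.
Import GRing.Theory.
Local Open Scope ring_scope.


Section Gen.
Variable K : fieldType.

Lemma malgUZ (T : choiceType) (c : K) (k : T) : << c *g k >> = c *: (<< k >> : {malg K[T]}).
Proof. by apply/malgP=> k'; rewrite mcoeffZ !mcoeffU mulr_natr. Qed.

Lemma lextEw (T : choiceType) (M : lmodType K) (f : T -> M) g (d : {fset T}) :
  (msupp g `<=` d)%fset -> lext f g = \sum_(k <- d) g@_k *: f k.
Proof.
move=> le; rewrite /lext [LHS](big_fset_incl _ le) => //= x xd /mcoeff_outdom ->.
by rewrite scale0r.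
Qed.

Lemma lextU (T : choiceType) (M : lmodType K) (f : T -> M) k : lext f << k >> = f k.
Proof. by rewrite (lextEw _ msuppU_le) big_seq_fset1 mcoeffUU scale1r. Qed.

Lemma lext_lin (T : choiceType) (M : lmodType K) (f : T -> M) : linear (lext f).
Proof.
move=> a x y.
pose d := (msupp x `|` msupp y `|` msupp (a *: x + y))%fset.
have h1 : (msupp x `<=` d)%fset by rewrite /d -fsetUA fsubsetUl.
have h2 : (msupp y `<=` d)%fset by rewrite /d fsetUC fsetUA fsubsetUr.
have h3 : (msupp (a *: x + y) `<=` d)%fset by rewrite /d fsubsetUr.
rewrite (lextEw _ h1) (lextEw _ h2) (lextEw _ h3) scaler_sumr -big_split /=.
by apply: eq_bigr => k _; rewrite mcoeffD mcoeffZ scalerDl scalerA.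
Qed.

Lemma eq_lext (T : choiceType) (M : lmodType K) (f1 f2 : T -> M) g :
  f1 =1 f2 -> lext f1 g = lext f2 g.
Proof. by move=> e; apply: eq_bigr => k _; rewrite e. Qed.

Lemma lext_linf (T : choiceType) (M : lmodType K) (f1 f2 : T -> M) a g :
  lext (fun k => a *: f1 k + f2 k) g = a *: lext f1 g + lext f2 g.
Proof.
rewrite /lext scaler_sumr -big_split /=; apply: eq_bigr => k _.
by rewrite scalerDr !scalerA mulrC.
Qed.

Lemma lin0 (U : lmodType K) (M : lmodType K) (F : U -> M) : linear F -> F 0 = 0.
Proof.
move=> L; have := L 1 0 0; rewrite scale1r addr0 => h.
by apply/eqP; rewrite -(subrr (F 0)) {2}h scale1r addrK.
Qed.

Lemma lin_sum (U : lmodType K) (M : lmodType K) (F : U -> M) (I : Type) (s : seq I)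
  (a : I -> K) (e : I -> U) : linear F ->
  F (\sum_(i <- s) a i *: e i) = \sum_(i <- s) a i *: F (e i).
Proof.
move=> L; elim: s => [|i s IH]; first by rewrite !big_nil lin0.
by rewrite !big_cons L IH.
Qed.

Lemma lin_sum1 (U : lmodType K) (M : lmodType K) (F : U -> M) (I : Type) (s : seq I)
  (e : I -> U) : linear F ->
  F (\sum_(i <- s) e i) = \sum_(i <- s) F (e i).
Proof.
move=> L; elim: s => [|i s IH]; first by rewrite !big_nil lin0.
by rewrite !big_cons -[e i]scale1r L IH !scale1r.
Qed.

Lemma linB (U : lmodType K) (M : lmodType K) (F : U -> M) x y : linear F ->
  F (x - y) = F x - F y.
Proof. by move=> L; apply: (zmod_morphism_linear L). Qed.

Lemma malgE' (T : choiceType) (x : {malg K[T]}) :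
  x = \sum_(k <- msupp x) x@_k *: << k >>.
Proof. by rewrite {1}(monalgE x); apply: eq_bigr => k _; rewrite malgUZ. Qed.

Lemma malg_lin_ext (T : choiceType) (M : lmodType K) (F G : {malg K[T]} -> M) :
  linear F -> linear G -> (forall k, F << k >> = G << k >>) -> forall x, F x = G x.
Proof.
move=> LF LG e x; rewrite (malgE' x) (lin_sum _ _ _ LF) (lin_sum _ _ _ LG).
by apply: eq_bigr => k _; rewrite e.
Qed.

Lemma lext_id (T : choiceType) (x : {malg K[T]}) : lext (fun k => << k >>) x = x.
Proof. by rewrite [RHS]malgE'. Qed.

Lemma bextE (T U : choiceType) (M : lmodType K) (f : T -> U -> M) g h :
  bext f g h = lext (fun k => lext (f k) h) g.
Proof.
rewrite /bext /lext; apply: eq_bigr => k _; rewrite scaler_sumr.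
by apply: eq_bigr => l _; rewrite scalerA.
Qed.

Lemma bext_linl (T U : choiceType) (M : lmodType K) (f : T -> U -> M) h :
  linear (fun g => bext f g h).
Proof. by move=> a x y; rewrite !bextE lext_lin. Qed.

Lemma bext_linr (T U : choiceType) (M : lmodType K) (f : T -> U -> M) g :
  linear (bext f g).
Proof.
move=> a x y; rewrite !bextE -lext_linf; apply: eq_lext => k.
by rewrite lext_lin.
Qed.

Lemma bextUU (T U : choiceType) (M : lmodType K) (f : T -> U -> M) k l :
  bext f << k >> << l >> = f k l.
Proof. by rewrite bextE !lextU. Qed.

Lemma malg_bilin_ext (T U : choiceType) (M : lmodType K)
  (F G : {malg K[T]} -> {malg K[U]} -> M) :
  (forall y, linear (F^~ y)) -> (forall x, linear (F x)) ->
  (forall y, linear (G^~ y)) -> (forall x, linear (G x)) ->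
  (forall k l, F << k >> << l >> = G << k >> << l >>) -> forall x y, F x y = G x y.
Proof.
move=> F1 F2 G1 G2 e x y.
apply: (malg_lin_ext (F1 y) (G1 y)) => k.
by apply: (malg_lin_ext (F2 _) (G2 _)) => l.
Qed.

End Gen.

Section Comb.
Variable X : choiceType.
Local Open Scope nat_scope.

Fixpoint nl (t : btree X) : nat :=
  match t with BLeaf _ => 1 | BNode a b => nl a + nl b end.
Definition sz (u : magb X) : nat := if u is Some t then nl t else 0.

Fixpoint St (t : btree X) (i j : nat) : magb X :=
  match t with
  | BLeaf x => if (i == 0) && (0 < j) then Some (BLeaf x) else None
  | BNode a b => graft (St a i j) (St b (i - nl a) (j - nl a))
  end.
Definition SM (u : magb X) i j := if u is Some t then St t i j else None.

Lemma nl_gt0 t : 0 < nl t.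
Proof. elim: t => //= a IHa b IHb; lia. Qed.

Lemma sz0 (u : magb X) : sz u = 0 -> u = None.
Proof. by case: u => //= t; have := nl_gt0 t; lia. Qed.

Lemma graftu0 (u : magb X) : graft u None = u.
Proof. by case: u. Qed.
Lemma graft0u (u : magb X) : graft None u = u.
Proof. by []. Qed.

Lemma sz_graft (u v : magb X) : sz (graft u v) = sz u + sz v.
Proof. by case: u => [a|] //; case: v => [b|] //=; rewrite addn0. Qed.

Lemma SM_graft (u v : magb X) i j :
  SM (graft u v) i j = graft (SM u i j) (SM v (i - sz u) (j - sz u)).
Proof.
case: u => [a|] /=; last by rewrite !subn0.
by case: v => [b|] //=; rewrite graftu0.
Qed.

Lemma sz_SM (u : magb X) i j : sz (SM u i j) = minn j (sz u) - i.
Proof.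
case: u => [t|] /=; last by rewrite minn0.
elim: t i j => [x|a IHa b IHb] i j /=.
  case: ifP => /= [/andP[/eqP -> h]|/negbT]; first lia.
  rewrite negb_and => /orP [h|h]; lia.
rewrite sz_graft IHa IHb; lia.
Qed.

Lemma St_j0 t i : St t i 0 = None.
Proof. by elim: t i => [x|a IHa b IHb] i /=; rewrite ?andbF // IHa sub0n IHb. Qed.

Lemma SM_None (u : magb X) i j : minn j (sz u) <= i -> SM u i j = None.
Proof. by move=> h; apply: sz0; rewrite sz_SM; lia. Qed.

Lemma SM_comp (u : magb X) i j k l : SM (SM u i j) k l = SM u (i + k) (minn j (i + l)).
Proof.
case: u => [t|] //=.
elim: t i j k l => [x|a IHa b IHb] i j k l /=.
  case: (boolP ((i == 0) && (0 < j))) => h1 /=.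
    by case: ifP => h2; case: ifP => h3 //; exfalso; move: h1 h2 h3; lia.
  by case: ifP => h3 //; exfalso; move: h1 h3; lia.
rewrite SM_graft.
have -> : sz (St a i j) = minn j (nl a) - i by rewrite -(sz_SM (Some a)).
rewrite IHb.
rewrite IHa; case: (leqP (nl a) j) => hj.
  by f_equal; f_equal; lia.
f_equal; rewrite (_ : minn _ _ = 0); last lia.
by rewrite (_ : minn _ _ - _ = 0) ?St_j0 //; lia.
Qed.

Lemma SM_full (u : magb X) j : sz u <= j -> SM u 0 j = u.
Proof.
case: u => [t|] //= h.
elim: t j h => [x|a IHa b IHb] j /= h; first by case: j h.
rewrite IHa ?IHb //; lia.
Qed.

Lemma SM_clamp (u : magb X) i j : SM u i j = SM u i (minn (sz u) j).
Proof. by rewrite -{1}(SM_full (leqnn (sz u))) SM_comp. Qed.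

End Comb.

Section Sums.
Variable V : zmodType.
Implicit Types F : nat -> V.

Lemma sum_split F p q : \sum_(0 <= i < (p + q)%N.+1) F i =
  \sum_(0 <= i < p.+1) F i + \sum_(0 <= j < q.+1) F (p + j)%N - F p.
Proof.
rewrite (big_cat_nat _ (n := p.+1)) //=; last by rewrite ltnS leq_addr.
rewrite (big_nat_recl _ _ _ (leq0n q)) /= addn0 [F p + _]addrC addrA addrK.
congr (_ + _).
rewrite -{1}[p.+1]add0n big_addn.
rewrite (_ : ((p + q).+1 - p.+1)%N = q); last by rewrite subSS addKn.
by apply: eq_big_nat => i _; rewrite !addnS addnC.
Qed.

Lemma lower_cond F i n : (i <= n)%N ->
  \sum_(0 <= j < i.+1) F j = \sum_(0 <= j < n.+1) (if (j <= i)%N then F j else 0).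
Proof.
move=> hin; rewrite [RHS](big_cat_nat _ (n := i.+1)) //=.
have -> : \sum_(i.+1 <= j < n.+1) (if (j <= i)%N then F j else 0) = 0.
  by rewrite big_nat_cond big1 // => j /andP[/andP[h1 h2] _]; rewrite leqNgt h1.
rewrite addr0; apply: eq_big_nat => j /andP[_ h].
by rewrite ltnS in h; rewrite h.
Qed.

Lemma upper_cond F j n : (j <= n)%N ->
  \sum_(0 <= k < (n - j)%N.+1) F (j + k)%N =
  \sum_(0 <= i < n.+1) (if (j <= i)%N then F i else 0).
Proof.
move=> hjn; rewrite [RHS](big_cat_nat (leq0n j) (leqW hjn)) /=.
have -> : \sum_(0 <= i < j) (if (j <= i)%N then F i else 0) = 0.
  by rewrite big_nat_cond big1 // => i /andP[/andP[h1 h2] _]; rewrite leqNgt h2.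
rewrite add0r.
have := big_addn 0 n.+1 j xpredT (fun i => if (j <= i)%N then F i else 0).
rewrite add0n => ->; rewrite subSn //.
by apply: eq_big_nat => i _; rewrite leq_addl addnC.
Qed.

Lemma tri_exchange (T : nat -> nat -> V) n :
  \sum_(0 <= i < n.+1) \sum_(0 <= j < i.+1) T j i =
  \sum_(0 <= j < n.+1) \sum_(0 <= k < (n - j)%N.+1) T j (j + k)%N.
Proof.
rewrite (eq_big_nat _ _ (F2 := fun i => \sum_(0 <= j < n.+1) (if (j <= i)%N then T j i else 0))); last first.
  by move=> i /andP[_ h]; apply: lower_cond.
rewrite exchange_big_nat; apply: eq_big_nat => j /andP[_ h].
by rewrite (upper_cond (T j)).
Qed.

End Sums.

Section Main.
Variables (K : fieldType) (X : choiceType).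
Local Notation MG := (Mag K X).
Local Notation MG2 := (Mag2 K X).

Definition cop (u : magb X) : MG2 :=
  \sum_(0 <= i < (sz u).+1) << (SM u 0%N i, SM u i (sz u)) >>.
Definition D0 : MG -> MG2 := lext cop.

Lemma tensUU (u v : magb X) : tens (<< u >> : MG) << v >> = << (u, v) >>.
Proof. by rewrite /tens bextUU. Qed.
Lemma mag_mulUU (u v : magb X) : mag_mul (<< u >> : MG) << v >> = << graft u v >>.
Proof. by rewrite /mag_mul bextUU. Qed.
Lemma mag2_mulUU (p q : magb X * magb X) :
  mag2_mul (<< p >> : MG2) << q >> = << (graft p.1 q.1, graft p.2 q.2) >>.
Proof. by rewrite /mag2_mul bextUU. Qed.
Lemma D0U u : D0 << u >> = cop u.
Proof. exact: lextU. Qed.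

Lemma lin_comp (U V W : lmodType K) (f : V -> W) (g : U -> V) :
  linear f -> linear g -> linear (fun x => f (g x)).
Proof. by move=> Lf Lg a x y; rewrite Lg Lf. Qed.

Lemma lin_addsub (U V : lmodType K) (f g h : U -> V) :
  linear f -> linear g -> linear h -> linear (fun x => f x + g x - h x).
Proof.
move=> Lf Lg Lh a x y; rewrite Lf Lg Lh scalerBr scalerDr addrACA opprD.
exact: addrACA.
Qed.

Lemma lin_add (U V : lmodType K) (f g : U -> V) :
  linear f -> linear g -> linear (fun x => f x + g x).
Proof.
by move=> Lf Lg a x y; rewrite Lf Lg scalerDr addrACA.
Qed.

Lemma lin_id (U : lmodType K) : linear (fun x : U => x).
Proof. by []. Qed.

Lemma mag2_mul_suml (I : Type) (s : seq I) (e : I -> MG2) w :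
  mag2_mul (\sum_(i <- s) e i) w = \sum_(i <- s) mag2_mul (e i) w.
Proof. exact: (lin_sum1 _ _ (bext_linl _ _)). Qed.
Lemma mag2_mul_sumr (I : Type) (s : seq I) (e : I -> MG2) w :
  mag2_mul w (\sum_(i <- s) e i) = \sum_(i <- s) mag2_mul w (e i).
Proof. exact: (lin_sum1 _ _ (bext_linr _ _)). Qed.

Lemma cop_graft (u v : magb X) :
  cop (graft u v) = mag2_mul (cop u) (tens (mag_one K X) << v >>)
    + mag2_mul (tens << u >> (mag_one K X)) (cop v) - tens << u >> << v >>.
Proof.
rewrite /mag_one !tensUU /cop sz_graft sum_split mag2_mul_suml mag2_mul_sumr.
congr (_ + _ - _).
- apply: eq_big_nat => i /andP[_ hi]; rewrite mag2_mulUU /= (graftu0 (SM u 0%N i)) !SM_graft.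
  rewrite sub0n (_ : (i - sz u)%N = 0%N); last by lia.
  rewrite (SM_None (u := v) (i := 0) (j := 0)) ?min0n // graftu0.
  rewrite addKn (SM_full (leqnn (sz v))) [SM u i _]SM_clamp.
  by rewrite (minn_idPl (leq_addr _ _)).
- apply: eq_big_nat => j /andP[_ hj]; rewrite mag2_mulUU /= !SM_graft.
  rewrite sub0n !addKn (SM_full (leq_addr _ _)).
  rewrite (SM_None (u := u) (i := (sz u + j)%N) (j := (sz u + sz v)%N)) //.
  by rewrite (minn_idPr (leq_addr _ _)) leq_addr.
- rewrite !SM_graft sub0n subnn addKn (SM_None (u := v) (i := 0) (j := 0)) ?min0n //.
  rewrite graftu0 (SM_full (leqnn _)) (SM_full (leqnn (sz v))).
  rewrite (SM_None (u := u) (i := sz u) (j := (sz u + sz v)%N)) //.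
  by rewrite (minn_idPr (leq_addr _ _)).
Qed.

Lemma D0_lin : linear D0.
Proof. exact: lext_lin. Qed.

Lemma D0_mul (x y : MG) : D0 (mag_mul x y) =
  mag2_mul (D0 x) (tens (mag_one K X) y) + mag2_mul (tens x (mag_one K X)) (D0 y) - tens x y.
Proof.
move: x y; apply: malg_bilin_ext => [y|x|y|x|k l].
- exact: (lin_comp D0_lin (bext_linl _ _)).
- exact: (lin_comp D0_lin (bext_linr _ _)).
- apply: lin_addsub; first exact: (lin_comp (bext_linl _ _) D0_lin).
    exact: (lin_comp (bext_linl _ _) (bext_linl _ _)).
  exact: bext_linl.
- apply: lin_addsub; first exact: (lin_comp (bext_linr _ _) (bext_linr _ _)).
    exact: (lin_comp (bext_linr _ _) D0_lin).
  exact: bext_linr.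
- by rewrite mag_mulUU !D0U cop_graft.
Qed.

Lemma D0_coproduct : is_mag_coproduct D0.
Proof.
split.
- exact: D0_lin.
- by rewrite /mag_one D0U tensUU /cop /= big_nat1.
- apply: malg_lin_ext.
  + exact: (lin_comp D0_lin (lext_lin _)).
  + apply: lin_add.
    * exact: (lin_comp (bext_linl _ _) (lext_lin _)).
    * exact: (lin_comp (bext_linr _ _) (lext_lin _)).
  + move=> k; rewrite /mag_incl lextU D0U /(mag_one K X) !tensUU /cop /=.
    by rewrite big_nat_recr //= big_nat1 addrC.
- exact: D0_mul.
Qed.

End Main.

Section Main2.
Variables (K : fieldType) (X : choiceType).
Local Notation MG := (Mag K X).
Local Notation MG2 := (Mag2 K X).
Local Notation MG3 := (Mag3 K X).

Lemma coprod_unique (D1 D2 : MG -> MG2) :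
  is_mag_coproduct D1 -> is_mag_coproduct D2 -> D1 =1 D2.
Proof.
case=> L1 one1 inc1 mul1 [L2 one2 inc2 mul2].
apply: (malg_lin_ext L1 L2) => u.
case: u => [t|]; last first.
  have -> : (<< None >> : MG) = mag_one K X by [].
  by rewrite one1 one2.
elim: t => [x|a IHa b IHb].
  have -> : (<< Some (BLeaf x) >> : MG) = mag_incl << x >> by rewrite /mag_incl lextU.
  by rewrite inc1 inc2.
have -> : (<< Some (BNode a b) >> : MG) = mag_mul << Some a >> << Some b >>.
  by rewrite mag_mulUU.
by rewrite mul1 mul2 IHa IHb.
Qed.

Lemma counitU (w : magb X) : mag_counit (<< w >> : MG) = (w == None)%:R.
Proof. by rewrite /mag_counit mcoeffU. Qed.

Lemma SM_neq (u : magb X) i j : (i < minn j (sz u))%N -> SM u i j != None.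
Proof. by move=> h; apply/eqP => e; have := sz_SM u i j; rewrite e /=; lia. Qed.

Lemma D0_counit (x : MG) :
  epsId (@mag_counit K X) (D0 x) = x /\ Ideps (@mag_counit K X) (D0 x) = x.
Proof.
split; move: x; apply: malg_lin_ext; try exact: (lin_comp (lext_lin _) (@D0_lin K X));
  try exact: lin_id; move=> u; rewrite D0U /cop.
- rewrite /epsId (lin_sum1 _ _ (lext_lin _)) big_nat_recl //= lextU /= counitU.
  rewrite (SM_None (u := u) (i := 0%N) (j := 0%N)) ?min0n // eqxx scale1r.
  rewrite (SM_full (leqnn _)).
  have -> : \sum_(0 <= i < sz u) lext (fun p => mag_counit << p.1 >> *: (<< p.2 >> : MG))
     << (SM u 0%N i.+1, SM u i.+1 (sz u)) >> = 0.
    rewrite big_nat_cond big1 // => i /andP[/andP[_ hi] _].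
    rewrite lextU /= counitU.
    have /negbTE -> : SM u 0%N i.+1 != None by apply: SM_neq; lia.
    by rewrite scale0r.
  by rewrite addr0.
- rewrite /Ideps (lin_sum1 _ _ (lext_lin _)) big_nat_recr //= lextU /= counitU.
  rewrite (SM_None (u := u) (i := sz u) (j := sz u)) ?geq_minr // eqxx scale1r.
  rewrite (SM_full (leqnn _)).
  have -> : \sum_(0 <= i < sz u) lext (fun p => mag_counit << p.2 >> *: (<< p.1 >> : MG))
     << (SM u 0%N i, SM u i (sz u)) >> = 0.
    rewrite big_nat_cond big1 // => i /andP[/andP[_ hi] _].
    rewrite lextU /= counitU.
    have /negbTE -> : SM u i (sz u) != None by apply: SM_neq; lia.
    by rewrite scale0r.
  by rewrite add0r.
Qed.

Lemma tens3L_suml (I : Type) (s : seq I) (e : I -> MG2) z :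
  tens3L (\sum_(i <- s) e i) z = \sum_(i <- s) tens3L (e i) z.
Proof. exact: (lin_sum1 _ _ (bext_linl _ _)). Qed.
Lemma tens3R_sumr (I : Type) (s : seq I) (e : I -> MG2) z :
  tens3R z (\sum_(i <- s) e i) = \sum_(i <- s) tens3R z (e i).
Proof. exact: (lin_sum1 _ _ (bext_linr _ _)). Qed.

Lemma D0_coass (x : MG) : DeltaId (@D0 K X) (D0 x) = IdDelta (@D0 K X) (D0 x).
Proof.
move: x; apply: malg_lin_ext; try exact: (lin_comp (lext_lin _) (@D0_lin K X)).
move=> u; rewrite D0U /cop /DeltaId /IdDelta !(lin_sum1 _ _ (lext_lin _)).
set n := sz u.
rewrite (eq_big_nat _ _ (F2 := fun i => \sum_(0 <= j < i.+1)
   (<< (SM u 0%N j, SM u j i, SM u i n) >> : MG3))); last first.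
  move=> i /andP[_ hi]; rewrite ltnS in hi.
  rewrite lextU /= D0U /cop tens3L_suml sz_SM subn0 (minn_idPl hi).
  apply: eq_big_nat => j /andP[_ hj]; rewrite ltnS in hj.
  by rewrite /tens3L bextUU /= !SM_comp /= !add0n (minn_idPr hj) minnn.
rewrite [RHS](eq_big_nat _ _ (F2 := fun i => \sum_(0 <= k < (n - i)%N.+1)
   (<< (SM u 0%N i, SM u i (i + k)%N, SM u (i + k)%N n) >> : MG3))); last first.
  move=> i /andP[_ hi]; rewrite ltnS in hi.
  rewrite lextU /= D0U /cop tens3R_sumr sz_SM minnn.
  apply: eq_big_nat => k /andP[_ hk].
  rewrite /tens3R bextUU /= !SM_comp /= addn0 (subnKC hi) minnn.
  by rewrite (minn_idPr (_ : (i + k <= n)%N)) //; lia.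
exact: (tri_exchange (fun j i => (<< (SM u 0%N j, SM u j i, SM u i n) >> : MG3))).
Qed.

End Main2.

Theorem proposition1p3 (K : fieldType) (X : choiceType) :
  (exists! D : Mag K X -> Mag2 K X, is_mag_coproduct D) /\
  (forall D : Mag K X -> Mag2 K X, is_mag_coproduct D ->
     coassociative D /\ AscMag_bialgebra D (@mag_counit K X)).
Proof.
split.
  exists (@D0 K X); split; first exact: D0_coproduct.
  move=> D HD; apply: functional_extensionality => x.
  exact: (coprod_unique (@D0_coproduct K X) HD).
move=> D HD.
have E : D = @D0 K X.
  apply: functional_extensionality => x.
  exact: (coprod_unique HD (@D0_coproduct K X)).
subst D; have [L1 one1 inc1 mul1] := @D0_coproduct K X.
have CA : coassociative (@D0 K X) by move=> x; exact: D0_coass.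
split => //; split => //.
- move=> x; split.
    by rewrite /mag_mul /mag_one bextE lextU /= lext_id.
  rewrite /mag_mul /mag_one bextE.
  rewrite (eq_lext _ (f2 := fun k => << k >>)) ?lext_id // => k.
  by rewrite lextU graftu0.
- split => // a x y; by rewrite /mag_counit mcoeffD mcoeffZ.
- split => // x; exact: D0_counit.
Qed.
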